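(* Let $G$ and $H$ be finite simple connected graphs with $|V(G)|>1$, and let $L$ be a non-empty subset of $V(G)$. If $\mathscr{C}(G\circ_L H)$ is an accessible set system, then $\mathscr{C}(H)$ is an accessible set system.
   Context: For a graph $\Gamma$ and $A\subseteq V(\Gamma)$, $\omega(\Gamma\setminus A)$ is the number of connected components of the induced subgraph on $V(\Gamma)\setminus A$. A subset $T\subseteq V(\Gamma)$ is a cutset if $T=\emptyset$ or, for every $v\in T$, $\omega(\Gamma\setminus (T\setminus\{v\}))<\omega(\Gamma\setminus T)$; $\mathscr{C}(\Gamma)$ is the set of cutsets. $\mathscr{C}(\Gamma)$ is an accessible set system if for every non-empty $T\in\mathscr{C}(\Gamma)$ there is $t\in T$ with $T\setminus\{t\}\in\mathscr{C}(\Gamma)$. For a non-empty $L\subseteq V(G)$, $G\circ_L H$ is the graph obtained from $G$ by taking, for each $v\in L$, a disjoint copy $H_v$ of $H$ and joining $v$ to every vertex of $H_v$. *)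

(* Defs.v *)
From mathcomp Require Import all_boot.
Set Implicit Arguments. Unset Strict Implicit. Unset Printing Implicit Defensive.

Definition simple_graph (V : finType) (e : rel V) : Prop :=
  symmetric e /\ irreflexive e.

Definition graph_connected (V : finType) (e : rel V) : Prop :=
  forall x y : V, connect e x y.

Section Cutsets.
Variables (V : finType) (e : rel V).

Definition del_rel (A : {set V}) : rel V :=
  fun x y => [&& x \notin A, y \notin A & e x y].

Definition comp_of (A : {set V}) (x : V) : {set V} :=
  [set y | (y \notin A) && connect (del_rel A) x y].

Definition omega (A : {set V}) : nat :=
  #|[set comp_of A x | x in ~: A]|.

Definition cutset (T : {set V}) : Prop :=
  T = set0 \/ forall v, v \in T -> omega (T :\ v) < omega T.

Definition accessible_cutsets : Prop :=
  forall T : {set V}, cutset T -> T != set0 ->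
    exists2 t, t \in T & cutset (T :\ t).
End Cutsets.

Section Corona.
Variables (VG VH : finType) (eG : rel VG) (eH : rel VH) (L : {set VG}).

(* the copies H_v, v in L: pairs (v, h) with v in L *)
Definition cop_vert := {x : VG * VH | x.1 \in L}.

Definition corona_vert : finType := (VG + cop_vert)%type.

Definition corona_rel : rel corona_vert :=
  fun x y =>
    match x, y with
    | inl u, inl v => eG u v
    | inl u, inr p => u == (val p).1
    | inr p, inl u => (val p).1 == u
    | inr p, inr q => ((val p).1 == (val q).1) && eH (val p).2 (val q).2
    end.
End Corona.

Arguments corona_rel {VG VH} eG eH L.

(* Main.v *)
Require Import Defs.
From mathcomp Require Import all_boot.
From mathcomp Require Import zify.
Set Implicit Arguments. Unset Strict Implicit. Unset Printing Implicit Defensive.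

Lemma connect_homo (T U : finType) (f : T -> U) (e : rel T) (e' : rel U) :
  (forall a b, e a b -> e' (f a) (f b)) ->
  forall a b, connect e a b -> connect e' (f a) (f b).
Proof.
move=> H a b /connectP [p pth ->]; elim: p a pth => [|c p IH] a /=.
  by rewrite connect0.
case/andP => eac pth; apply: connect_trans (connect1 (H _ _ eac)) (IH _ pth).
Qed.

Lemma conn_closed (T : finType) (e : rel T) (P : pred T) :
  (forall x y, P x -> e x y -> P y) ->
  forall x y, P x -> connect e x y -> P y.
Proof.
move=> H x y Px /connectP [p pth ->]; elim: p x Px pth => [|c p IH] x Px //=.
case/andP => exc pth; exact: IH (H _ _ Px exc) pth.
Qed.

Lemma connect_agree (T : finType) (e1 e2 : rel T) (P : pred T) :
  (forall x y, P x -> e1 x y -> P y) ->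
  (forall x y, P x -> e1 x y = e2 x y) ->
  forall x y, P x -> connect e1 x y -> connect e2 x y.
Proof.
move=> H He x y Px /connectP [p pth ->]; elim: p x Px pth => [|c p IH] x Px /=.
  by rewrite connect0.
case/andP => exc pth; apply: connect_trans (connect1 _) (IH _ (H _ _ Px exc) pth).
by rewrite -He.
Qed.

Lemma connect_agree_eq (T : finType) (e1 e2 : rel T) (P : pred T) :
  (forall x y, P x -> e1 x y -> P y) ->
  (forall x y, P x -> e1 x y = e2 x y) ->
  forall x y, P x -> connect e1 x y = connect e2 x y.
Proof.
move=> H He x y Px; apply/idP/idP; first exact: (connect_agree H He).
apply: (connect_agree (P := P)) => //.
- by move=> a b Pa; rewrite -He //; exact: H.
- by move=> a b Pa; rewrite He.
Qed.

Lemma connect_map_rev (T U : finType) (f : T -> U) (e : rel T) (e' : rel U) :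
  (forall a b, e' (f a) (f b) = e a b) ->
  (forall a y, e' (f a) y -> exists b, y = f b) ->
  forall a y, connect e' (f a) y -> exists2 b, y = f b & connect e a b.
Proof.
move=> Hf Hc a y /connectP [p pth ->]; elim: p a pth => [|c p IH] a /=.
  by move=> _; exists a => //; rewrite connect0.
case/andP => eac pth; have [b Eb] := Hc _ _ eac; subst c.
have [d -> cbd] := IH _ pth; exists d => //.
by apply: connect_trans cbd; apply: connect1; rewrite -Hf.
Qed.

Section Main.
Variables (VG VH : finType) (eG : rel VG) (eH : rel VH) (L : {set VG}).
Variables (v : VG) (Hv : v \in L).
Local Notation CV := (corona_vert VH L).
Local Notation E := (corona_rel eG eH L).

Definition fv (h : VH) : CV := inr (exist (fun x : VG * VH => x.1 \in L) (v, h) Hv).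

Lemma fv_inj : injective fv.
Proof. by move=> a b [] . Qed.

Definition AS (S : {set VH}) : {set CV} :=
  [set x | match x with inl u => u == v | inr p => ((val p).1 == v) && ((val p).2 \in S) end].
Definition AP (S : {set VH}) : {set CV} :=
  [set x | match x with inl _ => false | inr p => ((val p).1 == v) && ((val p).2 \in S) end].
Definition inP2 (x : CV) := match x with inl u => u != v | inr p => (val p).1 != v end.
Definition inP1 (x : CV) := match x with inl _ => false | inr p => (val p).1 == v end.
Definition Q1 (S : {set VH}) : {set CV} :=
  [set x | match x with inl _ => false | inr p => ((val p).1 == v) && ((val p).2 \notin S) end].
Definition Q2 : {set CV} := [set x | inP2 x].

Lemma inP1_fv (x : CV) : inP1 x -> exists h, x = fv h.
Proof.
case: x => //= [[[a b] Hab]] /= /eqP Ea; subst a; exists b; congr inr; exact: val_inj.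
Qed.

Lemma P2_closed S x y : inP2 x -> del_rel E (AS S) x y -> inP2 y.
Proof.
rewrite /del_rel /AS !inE.
case: x => [u|[[a b] Hab]]; case: y => [w|[[c d] Hcd]] //=.
- by move=> _ /and3P [].
- by move=> uv /and3P [_ _ /eqP <-].
- by move=> av /and3P [_ _ /eqP <-].
- by move=> av /and4P [_ _ /eqP <- _].
Qed.

Lemma P1_closed S x y : inP1 x -> del_rel E (AS S) x y -> inP1 y.
Proof.
rewrite /del_rel /AS !inE.
case: x => [u|[[a b] Hab]]; case: y => [w|[[c d] Hcd]] //=.
- by move=> /eqP -> /and3P [_ /negP wv /eqP Ew]; subst w; rewrite eqxx in wv.
- by move=> av /and3P [_ _ /andP [/eqP <- _]].
Qed.

Lemma P2_del S x y : inP2 x -> del_rel E (AS S) x y = inP2 y && E x y.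
Proof.
rewrite /del_rel /AS !inE.
case: x => [u|[[a b] Hab]]; case: y => [w|[[c d] Hcd]] //= => /negbTE xv.
- by rewrite xv.
- by case: (u =P c) => [<-|_]; rewrite xv ?andbF.
- by case: (a =P w) => [<-|_]; rewrite xv ?andbF.
- by case: (a =P c) => [<-|_]; rewrite xv ?andbF.
Qed.

Lemma P2_agree S x y : inP2 x -> del_rel E (AS S) x y = del_rel E (AS set0) x y.
Proof. by move=> P2x; rewrite !P2_del. Qed.

Lemma P2_notin S y : inP2 y -> y \notin AS S.
Proof. by rewrite /AS inE; case: y => [u|p] /= /negbTE ->. Qed.

Lemma comp_P2 S x : inP2 x -> comp_of E (AS S) x = comp_of E (AS set0) x.
Proof.
move=> P2x; apply/setP => y; rewrite !inE.
rewrite (@connect_agree_eq _ (del_rel E (AS S)) (del_rel E (AS set0)) inP2) //;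
  last by move=> a b Pa; apply: P2_agree.
  2: by move=> a b Pa; apply: P2_closed.
case C: (connect _ x y); rewrite ?andbF //.
have P2y : inP2 y.
  have Hc : forall a b, inP2 a -> del_rel E (AS set0) a b -> inP2 b.
    by move=> a b; apply: P2_closed.
  exact: (@conn_closed _ _ inP2 Hc x y P2x C).
by move: (P2_notin S P2y) (P2_notin set0 P2y); rewrite /AS !inE => -> ->.
Qed.

Lemma fv_in_AS S a : (fv a \in AS S) = (a \in S).
Proof. by rewrite /AS inE /= eqxx. Qed.

Lemma fv_del S a b : del_rel E (AS S) (fv a) (fv b) = del_rel eH S a b.
Proof. by rewrite /del_rel !fv_in_AS /= eqxx. Qed.

Lemma comp_fv S h : comp_of E (AS S) (fv h) = fv @: comp_of eH S h.
Proof.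
apply/setP => y; rewrite inE; apply/andP/imsetP.
  case=> yS /(@connect_map_rev _ _ fv (del_rel eH S) (del_rel E (AS S))) [].
  - exact: fv_del.
  - move=> a z /P1_closed; case/(_ (eqxx _))/inP1_fv => b ->; by exists b.
  move=> b Eb cb; subst y; exists b => //; rewrite inE cb andbT -(fv_in_AS S) //.
case=> b; rewrite inE => /andP [bS cb] ->; split; first by rewrite fv_in_AS.
by apply: (connect_homo (e := del_rel eH S)) cb => a c; rewrite fv_del.
Qed.

Lemma compl_AS S : ~: AS S = Q1 S :|: Q2.
Proof.
apply/setP => x; rewrite /AS /Q1 /Q2 !inE.
case: x => [u|p] //=.
by case: ((sval p).1 == v); case: ((sval p).2 \in S).
Qed.

Lemma Q1_img S : Q1 S = fv @: ~: S.
Proof.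
apply/setP => x; rewrite /Q1 inE; apply/idP/imsetP.
  case: x => //= [[[a b] Hab]] /= /andP [/eqP Ea nS]; subst a.
  by exists b; rewrite ?inE //; congr inr; apply: val_inj.
by case=> h; rewrite inE => hS ->; rewrite /= eqxx.
Qed.

Definition K := #|[set comp_of E (AS set0) x | x in Q2]|.

Lemma omega_AS S : omega E (AS S) = omega eH S + K.
Proof.
rewrite /omega compl_AS imsetU cardsU.
have -> : [set comp_of E (AS S) x | x in Q1 S] :&: [set comp_of E (AS S) x | x in Q2] = set0.
  apply/setP => C; rewrite !inE; apply/negP => /andP [/imsetP [x1 Q1x1 E1] /imsetP [x2 Q2x2 E2]].
  have E12 := etrans (esym E1) E2; clear E1 E2.
  have P1x1 : inP1 x1 by move: Q1x1; rewrite /Q1 inE; case: (x1) => //= p /andP [].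
  have P2x2 : inP2 x2 by move: Q2x2; rewrite inE.
  have : x2 \in comp_of E (AS S) x2 by rewrite inE P2_notin // connect0.
  rewrite -E12 inE => /andP [_ C12].
  have Hc : forall a b, inP1 a -> del_rel E (AS S) a b -> inP1 b.
    by move=> a b; apply: P1_closed.
  have := @conn_closed _ _ inP1 Hc x1 x2 P1x1 C12.
  by move: P2x2; case: x2 {E12 Q2x2 C12} => [u|p] //= /negbTE ->.
rewrite cards0 subn0 /K; congr (_ + _).
  rewrite Q1_img.
  have -> : [set comp_of E (AS S) x | x in fv @: ~: S] =
            [set fv @: A | A : {set VH} in [set comp_of eH S h | h in ~: S]].
    rewrite -(imset_comp (fun A : {set VH} => fv @: A) (comp_of eH S)).
    rewrite -(imset_comp (comp_of E (AS S)) fv).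
    by apply: eq_in_imset => h _ /=; exact: comp_fv.
  by rewrite card_imset //; apply: imset_inj; apply: fv_inj.
rewrite (eq_in_imset (g := comp_of E (AS set0))) // => x; rewrite inE => P2x; exact: comp_P2.
Qed.

Lemma K_pos u : u != v -> 0 < K.
Proof.
move=> uv; rewrite /K card_gt0; apply/set0Pn; exists (comp_of E (AS set0) (inl u)).
by apply: imset_f; rewrite inE.
Qed.

Lemma symE : symmetric eG -> symmetric eH -> symmetric E.
Proof.
move=> sG sH [a|p] [b|q] /=.
- exact: sG.
- exact: eq_sym.
- exact: eq_sym.
- by rewrite eq_sym sH.
Qed.

Lemma omega_AP S : graph_connected eG -> symmetric eG -> symmetric eH ->
  omega E (AP S) = 1.
Proof.
move=> Gc sG sH.
have symD : connect_sym (del_rel E (AP S)).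
  apply: sym_connect_sym => x y; rewrite /del_rel (symE sG sH x y).
  by case: (x \in _); case: (y \in _).
have cl : forall a b, connect eG a b -> connect (del_rel E (AP S)) (inl a) (inl b).
  move=> a b; apply: connect_homo => c d ecd.
  by rewrite /del_rel /AP !inE /=.
have conn : forall x, x \notin AP S -> connect (del_rel E (AP S)) x (inl v).
  case=> [u|p] xn; first exact: cl.
  apply: connect_trans (cl _ _ (Gc (val p).1 v)).
  apply: connect1; move: xn; rewrite /del_rel /AP !inE /= eqxx andbT => ->.
  by [].
rewrite /omega.
have -> : [set comp_of E (AP S) x | x in ~: AP S] = [set comp_of E (AP S) (inl v)].
  apply/setP => C; rewrite inE; apply/imsetP/eqP.
    case=> x; rewrite inE => xn ->; apply/setP => y.
    by rewrite /comp_of !inE (same_connect symD (conn x xn)).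
  by move=> ->; exists (inl v); rewrite // /AP !inE.
by rewrite cards1.
Qed.

Lemma AS_del_v T : AS T :\ inl v = AP T.
Proof. apply/setP => x; rewrite /AS /AP !inE; case: x => [u|p] //=. by case: (u =P v) => [->|]; rewrite ?eqxx ?andbF. Qed.

Lemma inr_fv_eq a b Hab t :
  (inr (exist (fun x : VG * VH => x.1 \in L) (a, b) Hab) == fv t :> CV) = (a == v) && (b == t).
Proof.
apply/eqP/andP => [|[/eqP Ea /eqP Eb]].
  by move=> /(congr1 (fun x : CV => match x with inr p => val p | inl _ => (v, t) end)) /= [-> ->].
by congr inr; apply: val_inj; rewrite /= Ea Eb.
Qed.

Lemma AS_del_fv T t : AS T :\ fv t = AS (T :\ t).
Proof.
apply/setP => x; rewrite /AS !inE; case: x => [u|[[a b] Hab]] //=.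
by rewrite inr_fv_eq; case: (a == v); rewrite /= ?inE.
Qed.

Lemma AP_del_fv T t : AP T :\ fv t = AP (T :\ t).
Proof.
apply/setP => x; rewrite /AP !inE; case: x => [u|[[a b] Hab]] //=.
by rewrite inr_fv_eq; case: (a == v); rewrite /= ?inE.
Qed.

Lemma fv_in_AP S a : (fv a \in AP S) = (a \in S).
Proof. by rewrite /AP inE /= eqxx. Qed.

Lemma AS_mem x T : x \in AS T -> x = inl v \/ exists2 t, t \in T & x = fv t.
Proof.
rewrite /AS inE; case: x => [u /eqP ->|[[a b] Hab]]; first by left.
move=> /= /andP [/eqP Ea bT]; subst a; right; exists b => //.
congr inr; exact: val_inj.
Qed.

Lemma main_sec u : u != v -> graph_connected eG -> symmetric eG -> symmetric eH ->
  accessible_cutsets E -> accessible_cutsets eH.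
Proof.
move=> uv Gc sG sH acc T cT Tn0.
case/set0Pn: (Tn0) => t0 t0T.
case: cT => [T0|cT]; first by rewrite T0 eqxx in Tn0.
have Kp := K_pos uv.
have cA : cutset E (AS T).
  right => x xA; case: (AS_mem xA) => [->| [t tT ->]].
  - rewrite AS_del_v omega_AP // omega_AS; have := cT t0 t0T; lia.
  - by rewrite AS_del_fv !omega_AS ltn_add2r; exact: cT.
have AT0 : AS T != set0 by apply/set0Pn; exists (inl v); rewrite /AS inE.
have [x xA cx] := acc _ cA AT0.
case: (AS_mem xA) => [Ex| [t tT Ex]]; subst x.
- exfalso; rewrite AS_del_v in cx; case: cx => [AP0 | cx].
    by have := fv_in_AP T t0; rewrite AP0 inE t0T.
  by have := cx (fv t0); rewrite fv_in_AP AP_del_fv !omega_AP // ltnn => /(_ t0T).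
- exists t => //; rewrite AS_del_fv in cx; case: cx => [A0|cx].
    by move: A0 => /setP /(_ (inl v)); rewrite /AS !inE eqxx.
  right => s sT; have := cx (fv s); rewrite fv_in_AS AS_del_fv !omega_AS ltn_add2r.
  exact.
Qed.
End Main.

Theorem theorem3p9 (VG VH : finType) (eG : rel VG) (eH : rel VH)
  (L : {set VG}) :
  simple_graph eG -> graph_connected eG -> 1 < #|VG| ->
  simple_graph eH -> graph_connected eH ->
  L != set0 ->
  accessible_cutsets (corona_rel eG eH L) ->
  accessible_cutsets eH.
Proof.
move=> [sG _] Gc cardG [sH _] _ Ln0 acc.
case/set0Pn: Ln0 => v Hv.
case/card_gt1P: cardG => a [b [_ _ ab]].
have [u uv] : exists u, u != v.
  case: (a =P v) => [Ea|/eqP]; last by exists a.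
  by exists b; rewrite -Ea eq_sym.
exact: (main_sec Hv uv Gc sG sH acc).
Qed.
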